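(* In the setting described in the context, for every $K\in\mathbb{N}$, $\mathcal{L}^K_\phi\ge\mathcal{L}^{K+1}_\phi$, where for $k\in\mathbb{N}$ $$\mathcal{L}^k_\phi=\mathbb{E}_{q^k_\phi(\tau)}\left[\sum_{t=0}^{k-1}\gamma^t\Big((1-\gamma)\log r(s_t,a_t)+\log e_\phi(z_{t+1}\mid s_{t+1})-\log m_\phi(z_{t+1}\mid z_t,a_t)\Big)+\gamma^k\log Q(s_k,a_k)\right].$$
   Context: An MDP has states $s$, actions $a$, initial state distribution $p_0(s)$, transition density $p(s_{t+1}\mid s_t,a_t)$, a nonnegative reward function $r(s,a)\ge 0$, and discount $\gamma\in[0,1)$ (convention $\log 0=-\infty$). An encoder $e_\phi(z\mid s)$ (conditional density over representations), a latent-space model $m_\phi(z_{t+1}\mid z_t,a_t)$ (conditional density), and a latent policy $\pi_\phi(a\mid z)$ are given. Trajectories are $\tau=(s_0,a_0,z_0,s_1,a_1,z_1,\dots)$, with true distribution $p_\phi(\tau)=p_0(s_0)\prod_{t\ge0}p(s_{t+1}\mid s_t,a_t)\pi_\phi(a_t\mid z_t)e_\phi(z_t\mid s_t)$. The Q-function is $Q(s,a)=\mathbb{E}_{p_\phi}[(1-\gamma)\sum_{t\ge0}\gamma^t r(s_t,a_t)\mid s_0=s,a_0=a]$. For $k\in\mathbb{N}$, $q^k_\phi(\tau)=p_0(s_0)e_\phi(z_0\mid s_0)\pi_\phi(a_0\mid z_0)\prod_{t=1}^k p(s_t\mid s_{t-1},a_{t-1})m_\phi(z_t\mid z_{t-1},a_{t-1})\pi_\phi(a_t\mid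 z_t)$. *)

(* Defs.v *)
From HB Require Import structures.
From mathcomp Require Import all_boot all_order all_algebra.
From mathcomp Require Import all_classical all_reals all_analysis.
Set Implicit Arguments. Unset Strict Implicit. Unset Printing Implicit Defensive.
Import Order.TTheory GRing.Theory Num.Theory.
Local Open Scope classical_set_scope.
Local Open Scope ring_scope.

Definition elogR {R : realType} (x : R) : \bar R :=
  if 0 < x then (ln x)%:E else -oo%E.
Definition elog {R : realType} (x : \bar R) : \bar R :=
  match x with
  | EFin y => elogR y
  | +oo%E => +oo%E
  | -oo%E => -oo%E
  end.

Section MDP.
Context (d1 d2 d3 : measure_display) (S : measurableType d1)
  (A : measurableType d2) (Z : measurableType d3) (R : realType).
(* reference measures w.r.t. which all densities are taken *)
Context (muS : set S -> \bar R) (muZ : set Z -> \bar R) (muA : set A -> \bar R).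
Context (p : S -> A -> S -> R)     (* p s a s' = p(s' | s, a) *)
        (pi : Z -> A -> R).        (* pi z a  = pi_phi(a | z) *)

(* A partial trajectory is stored as a history (most recent step first) of
   triples (s_t, z_t, a_t).  [zd s z a s' z'] is the density of z_{t+1} = z'
   given (s_t,z_t,a_t) = (s,z,a) and s_{t+1} = s'. *)
Definition step_int (zd : S -> Z -> A -> S -> Z -> R)
  (F : S * Z * A -> \bar R) (x : S * Z * A) : \bar R :=
  let: (s, z, a) := x in
  (\int[muS]_s' ((p s a s')%:E *
     \int[muZ]_z' ((zd s z a s' z')%:E *
        \int[muA]_a' ((pi z' a')%:E * F (s', z', a')))))%E.

(* [ext zd n F h] : conditional expectation of F(history) after n more
   steps of the process, starting from the history h. *)
Fixpoint ext (zd : S -> Z -> A -> S -> Z -> R) (n : nat)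
  (F : seq (S * Z * A) -> \bar R) (h : seq (S * Z * A)) : \bar R :=
  match n with
  | 0 => F h
  | n'.+1 => step_int zd (fun x => ext zd n' F (x :: h)) (head point h)
  end.

Definition traj (h : seq (S * Z * A)) (t : nat) : S * Z * A := nth point (rev h) t.
Definition st h t := (traj h t).1.1.
Definition zt h t := (traj h t).1.2.
Definition at_ h t := (traj h t).2.
End MDP.

Section Objective.
Context (d1 d2 d3 : measure_display) (S : measurableType d1)
  (A : measurableType d2) (Z : measurableType d3) (R : realType).
Context (muS : set S -> \bar R) (muZ : set Z -> \bar R) (muA : set A -> \bar R).
Context (p0 : S -> R) (p : S -> A -> S -> R) (e : S -> Z -> R)
  (m : Z -> A -> Z -> R) (pi : Z -> A -> R) (r : S -> A -> R) (gamma : R).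

(* true process p_phi: z_{t+1} ~ e_phi(. | s_{t+1}) *)
Definition zd_true : S -> Z -> A -> S -> Z -> R := fun _ _ _ s' z' => e s' z'.
(* model process q_phi: z_{t+1} ~ m_phi(. | z_t, a_t) *)
Definition zd_model : S -> Z -> A -> S -> Z -> R := fun _ z a _ z' => m z a z'.

Definition Qtrunc (N : nat) (s : S) (a : A) : \bar R :=
  ext muS muZ muA p pi zd_true N
    (fun h => ((1 - gamma) * \sum_(t < N.+1) gamma ^+ t * r (st h t) (at_ h t))%:E)
    [:: (s, point, a)].

(* Q(s,a) = E_{p_phi}[(1-gamma) sum_{t>=0} gamma^t r(s_t,a_t) | s_0=s, a_0=a],
   obtained (monotone convergence, r >= 0) as the limit of the truncations *)
Definition Qfun (s : S) (a : A) : \bar R := lim (Qtrunc N s a @[N --> \oo]).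

Definition Lintegrand (k : nat) (h : seq (S * Z * A)) : \bar R :=
  ((\sum_(t < k) (gamma ^+ t)%:E *
      ((1 - gamma)%:E * elogR (r (st h t) (at_ h t))
       + elogR (e (st h t.+1) (zt h t.+1))
       - elogR (m (zt h t) (at_ h t) (zt h t.+1))))
   + (gamma ^+ k)%:E * elog (Qfun (st h k) (at_ h k)))%E.

(* expectation under q^k_phi of a function of the trajectory up to time k *)
Definition Eq (k : nat) (F : seq (S * Z * A) -> \bar R) : \bar R :=
  (\int[muS]_s0 ((p0 s0)%:E *
    \int[muZ]_z0 ((e s0 z0)%:E *
      \int[muA]_a0 ((pi z0 a0)%:E *
         ext muS muZ muA p pi zd_model k F [:: (s0, z0, a0)]))))%E.

Definition Lobj (k : nat) : \bar R := Eq k (Lintegrand k).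

Definition Lintegrable (k : nat) : Prop :=
  (Eq k (fun h => `|Lintegrand k h|) < +oo)%E.
End Objective.

(* Main.v *)
Require Import Defs.
From HB Require Import structures.
From mathcomp Require Import all_boot all_order all_algebra.
From mathcomp Require Import all_classical all_reals all_analysis.
From mathcomp Require Import measurable_realfun ring lra.
Import Order.TTheory GRing.Theory Num.Theory.
Local Open Scope classical_set_scope.
Local Open Scope ring_scope.




Section Gen.
Local Open Scope ereal_scope.
Context d (X : measurableType d) (R : realType).
Variable mu : {measure set X -> \bar R}.

Lemma le_int_free (f g : X -> \bar R) : (forall x, f x <= g x) ->
  \int[mu]_x f x <= \int[mu]_x g x.
Proof.
move=> fg; rewrite /integral; apply: leeB; apply: ereal_sup_le.
- move=> _ [h hle <-]; exists h => // x; apply: le_trans (hle x) _.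
  by rewrite !patch_setT; apply: (@funepos_le _ _ setT) => [y _|]; [exact: fg|rewrite in_setT].
- move=> _ [h hle <-]; exists h => // x; apply: le_trans (hle x) _.
  by rewrite !patch_setT; apply: (@funeneg_le _ _ setT) => [y _|]; [exact: fg|rewrite in_setT].
Qed.

Variables (rho : X -> R) (mrho : measurable_fun setT rho)
  (rho0 : forall x, (0 <= rho x)%R) (rho1 : \int[mu]_x (rho x)%:E = 1).

Lemma dens_le (f g : X -> \bar R) : (forall x, f x <= g x) ->
  \int[mu]_x ((rho x)%:E * f x) <= \int[mu]_x ((rho x)%:E * g x).
Proof. by move=> fg; apply: le_int_free => x; rewrite lee_wpmul2l ?lee_fin. Qed.

Let mrhoE : measurable_fun setT (fun x => (rho x)%:E).
Proof. exact/measurable_EFinP. Qed.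

Lemma dens_cst (c : \bar R) : \int[mu]_x ((rho x)%:E * c) = c.
Proof.
have [c0|c0] := leP 0 c.
  by rewrite ge0_integralZr// ?rho1 ?mul1e// => x _; rewrite lee_fin.
have -> : (fun x => (rho x)%:E * c) = (fun x => - ((rho x)%:E * - c)).
  by apply/funext => x; rewrite muleN oppeK.
rewrite integral_ge0N; last first.
  by move=> x _; rewrite mule_ge0// ?lee_fin// oppe_ge0 ltW.
by rewrite ge0_integralZr// ?rho1 ?mul1e ?oppeK// ?oppe_ge0 ?ltW// => x _; rewrite lee_fin.
Qed.


Let mrF (F : X -> \bar R) : measurable_fun setT F ->
  measurable_fun setT (fun x => (rho x)%:E * F x).
Proof. by move=> mF; apply: emeasurable_funM => //; exact/measurable_EFinP. Qed.

Lemma dens_addc_le' (C : R) (G : X -> \bar R) : measurable_fun setT G ->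
  (forall x, 0 <= G x) ->
  \int[mu]_x ((rho x)%:E * C%:E + G x) <= C%:E + \int[mu]_x G x.
Proof.
move=> mG G0.
have mC : measurable_fun setT (fun x => (rho x)%:E * C%:E).
  by apply: emeasurable_funM; [exact/measurable_EFinP|exact: measurable_cst].
have [C0|C0] := leP 0%R C.
  rewrite ge0_integralD//; first by rewrite dens_cst.
  by move=> x _; rewrite mule_ge0// lee_fin.
have [->|Hfin] := eqVneq (\int[mu]_x G x) +oo.
  by rewrite addey// leey.
have i1 : mu.-integrable setT (fun x => (rho x)%:E * C%:E).
  apply/integrableP; split => //.
  under eq_integral do rewrite abseM gee0_abs ?lee_fin//.
  by rewrite dens_cst ltey.
have i2 : mu.-integrable setT G.
  apply/integrableP; split => //.
  under eq_integral do rewrite gee0_abs//.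
  by rewrite ltey.
by rewrite integralD// dens_cst.
Qed.

Lemma dens_addc_le (C : R) (F : X -> \bar R) : measurable_fun setT F ->
  (forall x, 0 <= F x) ->
  \int[mu]_x ((rho x)%:E * (C%:E + F x)) <= C%:E + \int[mu]_x ((rho x)%:E * F x).
Proof.
move=> mF F0; under eq_integral do rewrite muleDr//.
apply: dens_addc_le'; first exact: mrF.
by move=> x; rewrite mule_ge0// lee_fin.
Qed.

Lemma dens_lin (a b : R) (F : X -> \bar R) : measurable_fun setT F ->
  (forall x, 0 <= F x) -> (0 <= a)%R -> (0 <= b)%R ->
  \int[mu]_x ((rho x)%:E * (a%:E + b%:E * F x)) =
  a%:E + b%:E * \int[mu]_x ((rho x)%:E * F x).
Proof.
move=> mF F0 a0 b0.
under eq_integral do rewrite muleDr// muleCA.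
rewrite ge0_integralD//; first rewrite dens_cst ge0_integralZl//.
all: try by move=> x _; rewrite ?mule_ge0 ?lee_fin.
all: try by rewrite lee_fin.
all: try exact: mrF.
all: try by apply: emeasurable_funM; [exact/measurable_EFinP|exact: measurable_cst].
all: try by apply: measurable_funeM; exact: mrF.
Qed.

Lemma dens_mct (F : nat -> X -> \bar R) :
  (forall n, measurable_fun setT (F n)) -> (forall n x, 0 <= F n x) ->
  (forall x, {homo F^~ x : n m / (n <= m)%N >-> n <= m}) ->
  \int[mu]_x ((rho x)%:E * limn (F^~ x)) = limn (fun n => \int[mu]_x ((rho x)%:E * F n x)).
Proof.
move=> mF F0 ndF.
rewrite -(monotone_convergence mu measurableT (g' := fun n x => (rho x)%:E * F n x)).
- apply: eq_integral => x _; rewrite limeMl//.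
  exact: ereal_nondecreasing_is_cvgn.
- by move=> n; exact: mrF.
- by move=> n x _; rewrite mule_ge0// lee_fin.
- by move=> x _ n m nm; rewrite lee_wpmul2l ?lee_fin// ndF.
Qed.

End Gen.


Section Hist.
Context (d1 d2 d3 : measure_display) (S : measurableType d1)
  (A : measurableType d2) (Z : measurableType d3) (R : realType).
Context (muS : set S -> \bar R) (muZ : set Z -> \bar R) (muA : set A -> \bar R).
Context (p : S -> A -> S -> R) (pi : Z -> A -> R).
Local Notation EXT := (ext muS muZ muA p pi).

Lemma ext_eq zd n F F' h : (forall l, size l = n -> F (l ++ h) = F' (l ++ h)) ->
  EXT zd n F h = EXT zd n F' h.
Proof.
elim: n h => [|n IH] h H; first exact: (H [::]).
cbn [ext].
rewrite (_ : (fun x => EXT zd n F (x :: h)) = (fun x => EXT zd n F' (x :: h))) //.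
apply/funext => x; apply: IH => l sl.
by rewrite -cat_rcons; apply: H; rewrite size_rcons sl.
Qed.

Lemma ext_split zd n F h : EXT zd n.+1 F h = EXT zd n (EXT zd 1 F) h.
Proof.
elim: n h => [|n IH] h; first by [].
cbn [ext].
rewrite (_ : (fun x => EXT zd n.+1 F (x :: h)) = (fun x => EXT zd n (EXT zd 1 F) (x :: h))) //.
by apply/funext => x; exact: IH.
Qed.

Lemma traj_cat (l h : seq (S * Z * A)) t : (t < size h)%N -> traj (l ++ h) t = traj h t.
Proof. by move=> th; rewrite /traj rev_cat nth_cat size_rev th. Qed.

Lemma traj_head (h : seq (S * Z * A)) : h != [::] -> traj h (size h).-1 = head point h.
Proof.
case: h => // x h _; rewrite /traj nth_rev /=; last by rewrite ltnS leqnn.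
by rewrite subnn.
Qed.

Lemma traj_last (x : S * Z * A) h : traj (x :: h) (size h) = x.
Proof. by rewrite /traj rev_cons nth_rcons size_rev ltnn eqxx. Qed.

Lemma traj_lt (x : S * Z * A) h t : (t < size h)%N -> traj (x :: h) t = traj h t.
Proof. by move=> th; rewrite /traj rev_cons nth_rcons size_rev th. Qed.

End Hist.


Section RealIneq.
Context (R : realType).

Lemma ln_le_sub1 (x : R) : 0 < x -> ln x <= x - 1.
Proof.
move=> x0; have := @le_ln1Dx R (x - 1).
rewrite addrCA subrr addr0; apply; lra.
Qed.

Lemma RI (cr G q rr ee mm yy g : R) : 0 <= G -> 0 <= g -> g < 1 -> 0 < rr -> 0 < q ->
  0 < ee -> 0 < mm -> 0 < yy ->
  cr + G * ((1 - g) * ln rr + ln ee - ln mm) + G * g * ln yy <=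
  cr + G * (ln q - 1 + (1 - g) * rr / q - (1 - g)) + ee / mm * (G * (1 - g) + G * g / q * yy).
Proof.
move=> G0 g0 g1 r0 q0 e0 m0 y0.
have iq0 : 0 < q^-1 by rewrite invr_gt0.
have im0 : 0 < mm^-1 by rewrite invr_gt0.
have h1 := ln_le_sub1 _ (mulr_gt0 r0 iq0).
have h2 := ln_le_sub1 _ (mulr_gt0 e0 im0).
have h3 := ln_le_sub1 _ (mulr_gt0 (mulr_gt0 (mulr_gt0 e0 im0) y0) iq0).
rewrite lnM ?posrE// lnV ?posrE// in h1.
rewrite lnM ?posrE// lnV ?posrE// in h2.
rewrite lnM ?posrE ?mulr_gt0// lnM ?posrE ?mulr_gt0// lnM ?posrE// lnV ?posrE// lnV ?posrE// in h3.
have c1 : 0 <= G * (1 - g) by rewrite mulr_ge0// subr_ge0 ltW.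
have c3 : 0 <= G * g by rewrite mulr_ge0.
have k1 := ler_wpM2l c1 h1.
have k2 := ler_wpM2l c1 h2.
have k3 := ler_wpM2l c3 h3.
have qq : q * q^-1 = 1 by rewrite mulfV// gt_eqF.
have mq : mm * mm^-1 = 1 by rewrite mulfV// gt_eqF.
rewrite ?mulrA.
nra.
Qed.

Lemma RI0 (cr G q rr ee mm g : R) : 0 <= G -> g = 0 -> 0 < rr -> 0 < q ->
  0 < ee -> 0 < mm ->
  cr + G * ((1 - g) * ln rr + ln ee - ln mm) <=
  cr + G * (ln q - 1 + (1 - g) * rr / q - (1 - g)) + ee / mm * (G * (1 - g)).
Proof.
move=> G0 g0 r0 q0 e0 m0.
have := RI cr G q rr ee mm 1 g G0 _ _ r0 q0 e0 m0 ltr01.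
rewrite g0 ln1 !mulr0 !mul0r !addr0; apply; lra.
Qed.

End RealIneq.


Section Main.
Context (d1 d2 d3 : measure_display) (S : measurableType d1)
  (A : measurableType d2) (Z : measurableType d3) (R : realType)
  (muS : {sigma_finite_measure set S -> \bar R})
  (muZ : {sigma_finite_measure set Z -> \bar R})
  (muA : {sigma_finite_measure set A -> \bar R})
  (p : S -> A -> S -> R) (e : S -> Z -> R)
  (m : Z -> A -> Z -> R) (pi : Z -> A -> R) (r : S -> A -> R) (gamma : R)
  (hg0 : 0 <= gamma) (hg1 : gamma < 1)
  (hr : forall s a, 0 <= r s a)
  (mp : measurable_fun setT (fun x : S * A * S => p x.1.1 x.1.2 x.2))
  (me : measurable_fun setT (fun x : S * Z => e x.1 x.2))
  (mm : measurable_fun setT (fun x : Z * A * Z => m x.1.1 x.1.2 x.2))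
  (mpi : measurable_fun setT (fun x : Z * A => pi x.1 x.2))
  (mr : measurable_fun setT (fun x : S * A => r x.1 x.2))
  (p_ge0 : forall s a s', 0 <= p s a s')
  (e_ge0 : forall s z, 0 <= e s z)
  (m_ge0 : forall z a z', 0 <= m z a z')
  (pi_ge0 : forall z a, 0 <= pi z a)
  (p_1 : forall s a, (\int[muS]_s' (p s a s')%:E = 1)%E)
  (e_1 : forall s, (\int[muZ]_z (e s z)%:E = 1)%E)
  (m_1 : forall z a, (\int[muZ]_z' (m z a z')%:E = 1)%E)
  (pi_1 : forall z, (\int[muA]_a (pi z a)%:E = 1)%E).

Local Open Scope ereal_scope.

Let mpis z : measurable_fun setT (pi z).
Proof. exact: (measurable_fun_pair2 (f := fun x : Z * A => pi x.1 x.2)). Qed.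
Let mes s : measurable_fun setT (e s).
Proof. exact: (measurable_fun_pair2 (f := fun x : S * Z => e x.1 x.2)). Qed.
Let mps s a : measurable_fun setT (p s a).
Proof. exact: (measurable_fun_pair2 (f := fun x : S * A * S => p x.1.1 x.1.2 x.2) (s, a)). Qed.
Let mms z a : measurable_fun setT (m z a).
Proof. exact: (measurable_fun_pair2 (f := fun x : Z * A * Z => m x.1.1 x.1.2 x.2) (z, a)). Qed.

Definition I1 (f : S -> A -> \bar R) (s' : S) (z' : Z) :=
  \int[muA]_a' ((pi z' a')%:E * f s' a').
Definition I2 (f : S -> A -> \bar R) (s' : S) :=
  \int[muZ]_z' ((e s' z')%:E * I1 f s' z').
Definition Tstep (f : S -> A -> \bar R) (s : S) (a : A) :=
  \int[muS]_s' ((p s a s')%:E * I2 f s').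

Definition jm (f : S -> A -> \bar R) := measurable_fun setT (fun x : S * A => f x.1 x.2).

Section fixf.
Variables (f : S -> A -> \bar R) (mf : jm f) (f0 : forall s a, 0 <= f s a).

Lemma I1_ge0 s' z' : 0 <= I1 f s' z'.
Proof. by apply: integral_ge0 => a' _; rewrite mule_ge0// lee_fin. Qed.
Lemma I2_ge0 s' : 0 <= I2 f s'.
Proof. by apply: integral_ge0 => z' _; rewrite mule_ge0 ?lee_fin ?I1_ge0. Qed.
Lemma T_ge0 s a : 0 <= Tstep f s a.
Proof. by apply: integral_ge0 => s' _; rewrite mule_ge0 ?lee_fin ?I2_ge0. Qed.

Lemma mI1 : measurable_fun setT (fun y : S * Z => I1 f y.1 y.2).
Proof.
apply: (measurable_fun_fubini_tonelli_F (m2 := muA)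
  (fun q : S * Z * A => (pi q.1.2 q.2)%:E * f q.1.1 q.2)).
- apply: emeasurable_funM.
    apply/measurable_EFinP.
    apply: (@measurableT_comp _ _ _ _ _ _ (fun x : Z * A => pi x.1 x.2) _
      (fun q : S * Z * A => (q.1.2, q.2))) => //.
    apply: measurable_fun_pair => //.
    exact: measurableT_comp.
  apply: (@measurableT_comp _ _ _ _ _ _ (fun x : S * A => f x.1 x.2) _
      (fun q : S * Z * A => (q.1.1, q.2))) => //.
  apply: measurable_fun_pair => //.
  exact: measurableT_comp.
- by move=> q; rewrite mule_ge0// lee_fin.
Qed.

Lemma mI2 : measurable_fun setT (I2 f).
Proof.
apply: (measurable_fun_fubini_tonelli_F (m2 := muZ)
  (fun y : S * Z => (e y.1 y.2)%:E * I1 f y.1 y.2)).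
- by apply: emeasurable_funM; [exact/measurable_EFinP|exact: mI1].
- by move=> q; rewrite mule_ge0 ?lee_fin ?I1_ge0.
Qed.

Lemma mT : jm (Tstep f).
Proof.
apply: (measurable_fun_fubini_tonelli_F (m2 := muS)
  (fun q : S * A * S => (p q.1.1 q.1.2 q.2)%:E * I2 f q.2)).
- apply: emeasurable_funM; first exact/measurable_EFinP.
  exact: (measurableT_comp mI2).
- by move=> q; rewrite mule_ge0 ?lee_fin ?I2_ge0.
Qed.

Lemma I1_lin (al be : R) s' z' : (0 <= al)%R -> (0 <= be)%R ->
  I1 (fun s a => al%:E + be%:E * f s a) s' z' = al%:E + be%:E * I1 f s' z'.
Proof.
move=> a0 b0; rewrite /I1 (@dens_lin _ _ _ _ _ (mpis z') (pi_ge0 z') (pi_1 z')) //.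
exact: (measurable_fun_pair2 (f := fun x : S * A => f x.1 x.2)).
Qed.

Lemma I2_lin (al be : R) s' : (0 <= al)%R -> (0 <= be)%R ->
  I2 (fun s a => al%:E + be%:E * f s a) s' = al%:E + be%:E * I2 f s'.
Proof.
move=> a0 b0; rewrite /I2.
under eq_integral => z' _ do rewrite I1_lin//.
rewrite (@dens_lin _ _ _ _ _ (mes s') (e_ge0 s') (e_1 s')) //; last exact: I1_ge0.
exact: (measurable_fun_pair2 (f := fun x : S * Z => I1 f x.1 x.2)) mI1.
Qed.

Lemma T_lin (al be : R) s a : (0 <= al)%R -> (0 <= be)%R ->
  Tstep (fun s a => al%:E + be%:E * f s a) s a = al%:E + be%:E * Tstep f s a.
Proof.
move=> a0 b0; rewrite /Tstep.
under eq_integral => s' _ do rewrite I2_lin//.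
by rewrite (@dens_lin _ _ _ _ _ (mps s a) (p_ge0 s a) (p_1 s a)) //; [exact: mI2|exact: I2_ge0].
Qed.

End fixf.

Lemma T_le f g s a : (forall s a, f s a <= g s a) -> Tstep f s a <= Tstep g s a.
Proof.
move=> fg; apply: le_int_free => s'; rewrite lee_wpmul2l ?lee_fin//.
apply: le_int_free => z'; rewrite lee_wpmul2l ?lee_fin//.
apply: le_int_free => a'; rewrite lee_wpmul2l ?lee_fin//.
Qed.

Fixpoint V (N : nat) : S -> A -> \bar R :=
  match N with
  | 0 => fun s a => ((1 - gamma) * r s a)%:E
  | N'.+1 => fun s a => ((1 - gamma) * r s a)%:E + gamma%:E * Tstep (V N') s a
  end.

Lemma V0 s a : V 0 s a = ((1 - gamma) * r s a)%:E. Proof. by []. Qed.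
Lemma VS N s a : V N.+1 s a = ((1 - gamma) * r s a)%:E + gamma%:E * Tstep (V N) s a.
Proof. by []. Qed.

Let g1 : (0 <= 1 - gamma)%R. Proof. by rewrite subr_ge0 ltW. Qed.

Lemma V_ge0 N s a : 0 <= V N s a.
Proof.
elim: N s a => [|N IH] s a; first by rewrite V0 lee_fin mulr_ge0.
rewrite VS; apply: adde_ge0; first by rewrite lee_fin mulr_ge0.
apply: mule_ge0; first by rewrite lee_fin.
exact: T_ge0.
Qed.

Lemma mV N : jm (V N).
Proof.
elim: N => [|N IH].
  apply/measurable_EFinP; apply: measurable_funM => //; exact: measurable_cst.
apply: emeasurable_funD.
  apply/measurable_EFinP; apply: measurable_funM => //; exact: measurable_cst.
apply: measurable_funeM; apply: mT => //; exact: V_ge0.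
Qed.

Lemma V_nd N s a : V N s a <= V N.+1 s a.
Proof.
elim: N s a => [|N IH] s a.
  rewrite [V 1 s a]VS [V 0 s a]V0; apply: leeDl; rewrite mule_ge0 ?lee_fin//.
  by apply: T_ge0 => s' a'; exact: V_ge0.
rewrite [V N.+2 s a]VS [V N.+1 s a]VS; apply: leeD2l.
apply: lee_wpmul2l; first by rewrite lee_fin.
exact: T_le.
Qed.

Lemma QT N : forall (A0 be : R) (h : seq (S * Z * A)), h != [::] ->
  (0 <= A0)%R -> (0 <= be)%R ->
  ext muS muZ muA p pi (zd_true e) N (fun h' => (A0 + be * ((1 - gamma) *
     \sum_(t < N.+1) gamma ^+ t * r (st h' ((size h).-1 + t)) (at_ h' ((size h).-1 + t))))%:E) h
  = A0%:E + be%:E * V N (head point h).1.1 (head point h).2.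
Proof.
have szh (h : seq (S * Z * A)) : h != [::] -> ((size h).-1 < size h)%N.
  by case: h.
elim: N => [|N IH] A0 be h hn A00 be0.
  cbn [ext]; rewrite big_ord1 expr0 mul1r addn0 /st /at_ traj_head// V0.

case Hh: (head point h) => [[s z] a].
cbn [ext]; rewrite Hh.
transitivity (step_int muS muZ muA p pi (zd_true e)
  (fun x => (A0 + be * ((1 - gamma) * r s a))%:E + (be * gamma)%:E * V N x.1.1 x.2) (s, z, a)).
  apply: (f_equal (fun G => step_int muS muZ muA p pi (zd_true e) G (s, z, a))).
  apply/funext => x.
  rewrite (ext_eq _ _ _ _ _ _ _ _ _ _ _ _ _ _ _ (fun h' => ((A0 + be * ((1 - gamma) * r s a)) + (be * gamma) * ((1 - gamma) *
     \sum_(t < N.+1) gamma ^+ t * r (st h' ((size (x :: h)).-1 + t)) (at_ h' ((size (x :: h)).-1 + t))))%:E)).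
    rewrite IH //.
      by rewrite addr_ge0// mulr_ge0// mulr_ge0.
    by rewrite mulr_ge0.
  move=> l sl; congr EFin.
  rewrite big_ord_recl addn0 expr0 mul1r /st /at_ -cat_rcons traj_cat ?szh// traj_head// Hh /=.

  under eq_bigr => i _ do rewrite /bump leq0n add1n addnS -addSn prednK ?lt0n ?size_eq0// exprS -mulrA.
  rewrite -mulr_sumr.
  ring.
change (Tstep (fun s' a' => (A0 + be * ((1 - gamma) * r s a))%:E + (be * gamma)%:E * V N s' a') s a =
  A0%:E + be%:E * V N.+1 s a).
rewrite T_lin //; first last.
- by rewrite mulr_ge0.
- by rewrite addr_ge0// mulr_ge0// mulr_ge0.
- exact: V_ge0.
- exact: mV.
rewrite VS.
rewrite [in RHS]muleDr//.
by rewrite [in RHS]addeA muleA -!EFinM -EFinD.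
Qed.


Local Notation Qf := (Qfun muS muZ muA p e pi r gamma).

Lemma QtruncE N s a : Qtrunc muS muZ muA p e pi r gamma N s a = V N s a.
Proof.
have := QT N 0 1 [:: (s, point, a)] isT (lexx 0) ler01.
rewrite add0e mul1e => <-.
rewrite /Qtrunc.
apply: (f_equal (fun F => ext muS muZ muA p pi (zd_true e) N F [:: (s, point, a)])).
apply/funext => h'; rewrite add0r mul1r; congr EFin.
Qed.

Lemma V_homo s a : {homo (fun N => V N s a) : n k / (n <= k)%N >-> n <= k}.
Proof. by apply/nondecreasing_seqP => N; exact: V_nd. Qed.

Lemma QfunL s a : Qf s a = limn (fun N => V N s a).
Proof.
rewrite /Qfun.
by rewrite (_ : (fun N => Qtrunc muS muZ muA p e pi r gamma N s a) = (fun N => V N s a))//;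
  apply/funext => N; exact: QtruncE.
Qed.

Lemma QfunE s a : Qf s a = ereal_sup (range (fun N => V N s a)).
Proof.
rewrite QfunL; apply/cvg_lim => //; apply: ereal_nondecreasing_cvgn.
exact: V_homo.
Qed.

Lemma Q_ge_V N s a : V N s a <= Qf s a.
Proof. by rewrite QfunE; apply: ereal_sup_ubound; exists N. Qed.

Lemma Q_ge0 s a : 0 <= Qf s a.
Proof. exact: le_trans (V_ge0 0 s a) (Q_ge_V 0 s a). Qed.

Lemma mQ : jm Qf.
Proof.
apply: (emeasurable_fun_cvg (fun N (x : S * A) => V N x.1 x.2)).
  by move=> N; exact: mV.
move=> x _; rewrite QfunL.
apply: ereal_nondecreasing_is_cvgn; exact: V_homo.
Qed.

Lemma I1_le f g s' z' : (forall s a, f s a <= g s a) -> I1 f s' z' <= I1 g s' z'.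
Proof.
by move=> fg; apply: le_int_free => a'; rewrite lee_wpmul2l ?lee_fin.
Qed.

Lemma I2_le f g s' : (forall s a, f s a <= g s a) -> I2 f s' <= I2 g s'.
Proof.
move=> fg; apply: le_int_free => z'; apply: lee_wpmul2l; first by rewrite lee_fin.
exact: I1_le.
Qed.

Lemma I1Q s' z' : I1 Qf s' z' = limn (fun N => I1 (V N) s' z').
Proof.
rewrite /I1; under eq_integral => a' _ do rewrite QfunL.
have H := @dens_mct _ _ _ _ _ (mpis z') (pi_ge0 z') (fun N => V N s').
rewrite H; first by [].
- move=> N; exact: (measurable_fun_pair2 (f := fun x : S * A => V N x.1 x.2)) (mV N).
- by move=> N x; exact: V_ge0.
- by move=> x; exact: V_homo.
Qed.

Lemma I2Q s' : I2 Qf s' = limn (fun N => I2 (V N) s').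
Proof.
rewrite /I2; under eq_integral => z' _ do rewrite I1Q.
have H := @dens_mct _ _ _ _ _ (mes s') (e_ge0 s') (fun N z' => I1 (V N) s' z').
rewrite H; first by [].
- move=> N; apply: (measurable_fun_pair2 (f := fun x : S * Z => I1 (V N) x.1 x.2)).
  apply: mI1; [exact: mV|exact: V_ge0].
- by move=> N x; apply: I1_ge0; exact: V_ge0.
- move=> x; apply/nondecreasing_seqP => N; apply: I1_le; exact: V_nd.
Qed.

Lemma TQ s a : Tstep Qf s a = limn (fun N => Tstep (V N) s a).
Proof.
rewrite /Tstep; under eq_integral => s' _ do rewrite I2Q.
have H := @dens_mct _ _ _ _ _ (mps s a) (p_ge0 s a) (fun N s' => I2 (V N) s').
rewrite H; first by [].
- move=> N; apply: mI2; [exact: mV|exact: V_ge0].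
- by move=> N x; apply: I2_ge0; exact: V_ge0.
- move=> x; apply/nondecreasing_seqP => N; apply: I2_le; exact: V_nd.
Qed.

Lemma bellman s a : ((1 - gamma) * r s a)%:E + gamma%:E * Tstep Qf s a <= Qf s a.
Proof.
have ndT : {homo (fun N => Tstep (V N) s a) : n k / (n <= k)%N >-> n <= k}.
  apply/nondecreasing_seqP => N; apply: T_le; exact: V_nd.
rewrite TQ -limeMl//; last exact: ereal_nondecreasing_is_cvgn.
have -> : ((1 - gamma) * r s a)%:E = limn (fun _ => ((1 - gamma) * r s a)%:E).
  by rewrite lim_cst.
rewrite -limeD.
- apply: lime_le.
    apply: ereal_nondecreasing_is_cvgn => n k nk.
    apply: leeD2l; apply: lee_wpmul2l; first by rewrite lee_fin.
    exact: ndT.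
  by apply: nearW => N; rewrite -VS; exact: Q_ge_V.
- exact: is_cvg_cst.
- apply: ereal_nondecreasing_is_cvgn => n k nk.
  apply: lee_wpmul2l; first by rewrite lee_fin.
  exact: ndT.
- by rewrite lim_cst// fin_num_adde_defr.
Qed.

Lemma mulNyp {x : R} : (0 < x)%R -> x%:E * -oo = -oo.
Proof. by move=> x0; rewrite muleC gt0_mulNye// lte_fin. Qed.
Lemma mulyp {x : R} : (0 < x)%R -> x%:E * +oo = +oo.
Proof. by move=> x0; rewrite muleC gt0_mulye// lte_fin. Qed.
Lemma elogR_pos {x : R} : (0 < x)%R -> elogR x = (ln x)%:E.
Proof. by move=> x0; rewrite /elogR x0. Qed.
Lemma elogR_0 : elogR (0 : R) = -oo.
Proof. by rewrite /elogR ltxx. Qed.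
Lemma elog_fin (y : R) : elog y%:E = elogR y. Proof. by []. Qed.
Lemma elog_y : elog (+oo : \bar R) = +oo. Proof. by []. Qed.

Lemma ge0_cases {x : R} : (0 <= x)%R -> x = 0%R \/ (0 < x)%R.
Proof. by rewrite le_eqVlt => /orP[/eqP <-|->]; [left|right]. Qed.

Lemma PB (cr G q : R) s a z s' z' a' : (0 < G)%R -> (0 < r s a)%R -> (0 < q)%R ->
  (0 < m z a z')%R ->
  (cr%:E + G%:E * ((1 - gamma)%:E * elogR (r s a) + elogR (e s' z') - elogR (m z a z')))
     + (G * gamma)%:E * elog (Qf s' a')
  <= (cr + G * (ln q - 1 + (1 - gamma) * r s a / q - (1 - gamma)))%:E +
     (e s' z' / m z a z')%:E * ((G * (1 - gamma))%:E + (G * gamma / q)%:E * Qf s' a').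
Proof.
move=> G0 r0 q0 m0.
rewrite (elogR_pos r0) (elogR_pos m0).
have [e0|epos] := ge0_cases (e_ge0 s' z').
  rewrite e0 elogR_0 addeNy addNye mulNyp// addeNy addNye; exact: leNye.
rewrite (elogR_pos epos).
have [g0|gpos] := ge0_cases hg0.
  have -> : (G * gamma)%:E * elog (Qf s' a') = 0 by rewrite g0 mulr0 mul0e.
  have -> : (G * gamma / q)%:E * Qf s' a' = 0 by rewrite g0 mulr0 mul0r mul0e.
  rewrite !adde0.
  have H := @RI0 R cr G q (r s a) (e s' z') (m z a z') gamma (ltW G0) g0 r0 q0 epos m0.
  by rewrite -lee_fin in H; exact: H.
case HQ: (Qf s' a') => [y| |].
- have y0 : (0 <= y)%R by have := Q_ge0 s' a'; rewrite HQ lee_fin.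
  rewrite elog_fin.
  have [->|ypos] := ge0_cases y0.
    by rewrite elogR_0 mulNyp ?mulr_gt0// addeNy; exact: leNye.
  rewrite (elogR_pos ypos).
  have H := @RI R cr G q (r s a) (e s' z') (m z a z') y gamma (ltW G0) hg0 hg1 r0 q0 epos m0 ypos.
  by rewrite -lee_fin in H; exact: H.
- suff -> : (e s' z' / m z a z')%:E * ((G * (1 - gamma))%:E + (G * gamma / q)%:E * +oo) = +oo.
    by rewrite addey// leey.
  by rewrite mulyp ?divr_gt0 ?mulr_gt0// addey// mulyp ?divr_gt0.
- by have := Q_ge0 s' a'; rewrite HQ.
Qed.

Lemma one_step (c : \bar R) (G : R) s z a (F : S * Z * A -> \bar R) : (0 <= G)%R ->
  (forall s' z' a', F (s', z', a') =
    (c + G%:E * ((1 - gamma)%:E * elogR (r s a) + elogR (e s' z') - elogR (m z a z')))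
    + (G * gamma)%:E * elog (Qf s' a')) ->
  step_int muS muZ muA p pi (zd_model m) F (s, z, a) <= c + G%:E * elog (Qf s a).
Proof.
move=> G0 hF.
have -> : step_int muS muZ muA p pi (zd_model m) F (s, z, a) =
  \int[muS]_s' ((p s a s')%:E * \int[muZ]_z' ((m z a z')%:E *
     \int[muA]_a' ((pi z' a')%:E * F (s', z', a')))) by [].
have Mc (k : \bar R) : \int[muS]_s' ((p s a s')%:E * \int[muZ]_z' ((m z a z')%:E *
     \int[muA]_a' ((pi z' a')%:E * k))) = k.
  have h1 z' : \int[muA]_a' ((pi z' a')%:E * k) = k.
    exact: (@dens_cst _ _ _ _ _ (mpis z') (pi_ge0 z') (pi_1 z')).
  have h2 : \int[muZ]_z' ((m z a z')%:E * \int[muA]_a' ((pi z' a')%:E * k)) = k.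
    under eq_integral => z' _ do rewrite h1.
    exact: (@dens_cst _ _ _ _ _ (mms z a) (m_ge0 z a) (m_1 z a)).
  under eq_integral => s' _ do rewrite h2.
  exact: (@dens_cst _ _ _ _ _ (mps s a) (p_ge0 s a) (p_1 s a)).
have Hm : (forall s' z' a', F (s', z', a') = -oo) ->
    \int[muS]_s' ((p s a s')%:E * \int[muZ]_z' ((m z a z')%:E *
     \int[muA]_a' ((pi z' a')%:E * F (s', z', a')))) <= c + G%:E * elog (Qf s a).
  move=> H; have -> : F = fun _ => -oo by apply/funext => [[[s' z'] a']]; exact: H.
  by rewrite Mc leNye.
have [G00|Gpos] := ge0_cases G0.
  have -> : F = fun _ => c.
    by apply/funext => [[[s' z'] a']]; rewrite hF G00 mul0e mul0r mul0e !adde0.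
  by rewrite Mc G00 mul0e adde0.
have [r00|rpos] := ge0_cases (hr s a).
  apply: Hm => s' z' a'.
  by rewrite hF r00 elogR_0 mulNyp ?subr_gt0// !addNye mulNyp// addeNy addNye.
have V0le := Q_ge_V 0 s a; rewrite V0 in V0le.
have rg0 : (0 < (1 - gamma) * r s a)%R by rewrite mulr_gt0// subr_gt0.
case: c hF Hm => [cr| |] hF Hm; last first.
- by apply: Hm => s' z' a'; rewrite hF !addNye.
- case HQ: (Qf s a) V0le => [q| |] V0le.
  + rewrite elog_fin elogR_pos; last by rewrite -lte_fin (lt_le_trans _ V0le)// lte_fin.
    by rewrite addye// leey.
  + by rewrite elog_y mulyp// addye// leey.
  + by move: V0le; rewrite leeNy_eq.
case HQ: (Qf s a) V0le => [q| |] V0le; last first.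
- by move: V0le; rewrite leeNy_eq.
- by rewrite elog_y mulyp// addey// leey.
have q0 : (0 < q)%R by rewrite -lte_fin (lt_le_trans _ V0le)// lte_fin.
rewrite elog_fin (elogR_pos q0).
pose C0 := (cr + G * (ln q - 1 + (1 - gamma) * r s a / q - (1 - gamma)))%R.
pose al := (G * (1 - gamma))%R.
pose be := (G * gamma / q)%R.
have al0 : (0 <= al)%R by rewrite mulr_ge0// subr_ge0 ltW.
have be0 : (0 <= be)%R by rewrite divr_ge0// ?mulr_ge0// ltW.
pose Y := fun s' a' => al%:E + be%:E * Qf s' a'.
have Y0 s' a' : 0 <= Y s' a' by rewrite adde_ge0 ?lee_fin// mule_ge0 ?lee_fin ?Q_ge0.
have mY : jm Y.
  apply: emeasurable_funD; first exact: measurable_cst.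
  by apply: measurable_funeM; exact: mQ.
apply: (@le_trans _ _ (\int[muS]_s' ((p s a s')%:E * (C0%:E + I2 Y s')))).
  apply: (@dens_le _ _ _ _ _ (p_ge0 s a)) => s'.
  rewrite /I2.
  apply: le_trans (@dens_addc_le' _ _ _ _ _ (mms z a) (m_ge0 z a) (m_1 z a) C0
     (fun z' => (e s' z')%:E * I1 Y s' z') _ _); last first.
  - by move=> z'; rewrite mule_ge0 ?lee_fin// I1_ge0.
  - apply: emeasurable_funM; first exact/measurable_EFinP.
    exact: (measurable_fun_pair2 (f := fun x : S * Z => I1 Y x.1 x.2) s' (mI1 Y mY Y0)).
  apply: le_int_free => z'.
  have [m00|mpos] := ge0_cases (m_ge0 z a z').
    by rewrite m00 !mul0e add0e mule_ge0 ?lee_fin// I1_ge0.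
  have HB : \int[muA]_a' ((pi z' a')%:E * F (s', z', a')) <=
      C0%:E + (e s' z' / m z a z')%:E * I1 Y s' z'.
    apply: le_trans (@dens_le _ _ _ _ _ (pi_ge0 z') _
      (fun a' => C0%:E + (e s' z' / m z a z')%:E * Y s' a') _) _.
      by move=> a'; rewrite hF; exact: PB.
    apply: le_trans (@dens_addc_le _ _ _ _ _ (mpis z') (pi_ge0 z') (pi_1 z') C0
      (fun a' => (e s' z' / m z a z')%:E * Y s' a') _ _) _.
    + apply: measurable_funeM.
      exact: (measurable_fun_pair2 (f := fun x : S * A => Y x.1 x.2)).
    + by move=> a'; rewrite mule_ge0 ?lee_fin ?divr_ge0.
    rewrite leeD2l// /I1.
    under eq_integral do rewrite muleCA.
    rewrite ge0_integralZl//; last by rewrite lee_fin divr_ge0.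
    + by apply: emeasurable_funM; [exact/measurable_EFinP|
        exact: (measurable_fun_pair2 (f := fun x : S * A => Y x.1 x.2))].
    + by move=> a' _; rewrite mule_ge0 ?lee_fin.
  apply: le_trans (lee_wpmul2l _ HB) _; first by rewrite lee_fin.
  by rewrite muleDr// muleA -[(m z a z')%:E * (e s' z' / m z a z')%:E]EFinM mulrCA mulfV ?gt_eqF// mulr1.
apply: le_trans (@dens_addc_le _ _ _ _ _ (mps s a) (p_ge0 s a) (p_1 s a) C0 (I2 Y)
   (mI2 Y mY Y0) (I2_ge0 Y Y0)) _.
rewrite -/(Tstep Y s a) /Y (T_lin Qf mQ Q_ge0)//.
have hb : gamma%:E * Tstep Qf s a <= (q - (1 - gamma) * r s a)%:E.
  by rewrite EFinB leeBrDl// -HQ; exact: bellman.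
have hb2 : be%:E * Tstep Qf s a <= (G / q * (q - (1 - gamma) * r s a))%:E.
  rewrite (_ : be = G / q * gamma)%R; last by rewrite /be mulrAC.
  rewrite EFinM -muleA EFinM.
  by apply: lee_wpmul2l hb; rewrite lee_fin divr_ge0// ltW.
apply: le_trans (leeD2l _ (leeD2l _ hb2)) _.
rewrite -EFinM -!EFinD lee_fin le_eqVlt; apply/orP; left; apply/eqP.
rewrite /C0 /al; field.
by rewrite gt_eqF.
Qed.

Lemma step_le zd (zd0 : forall s z a s' z', (0 <= zd s z a s' z')%R)
  (G G' : S * Z * A -> \bar R) x : (forall y, G y <= G' y) ->
  step_int muS muZ muA p pi zd G x <= step_int muS muZ muA p pi zd G' x.
Proof.
move=> GG; case: x => [[s z] a].
apply: le_int_free => s'; apply: lee_wpmul2l; first by rewrite lee_fin.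
apply: le_int_free => z'; apply: lee_wpmul2l; first by rewrite lee_fin.
apply: le_int_free => a'; apply: lee_wpmul2l; first by rewrite lee_fin.
exact: GG.
Qed.

Lemma ext_mono zd (zd0 : forall s z a s' z', (0 <= zd s z a s' z')%R) n G G' h :
  (forall l, size l = n -> G (l ++ h) <= G' (l ++ h)) ->
  ext muS muZ muA p pi zd n G h <= ext muS muZ muA p pi zd n G' h.
Proof.
elim: n h => [|n IH] h H; first exact: (H [::]).
cbn [ext]; apply: step_le => // x; apply: IH => l sl.
by rewrite -cat_rcons; apply: H; rewrite size_rcons sl.
Qed.

Lemma key K (h : seq (S * Z * A)) : size h = K.+1 ->
  ext muS muZ muA p pi (zd_model m) 1 (Lintegrand muS muZ muA p e m pi r gamma K.+1) h
  <= Lintegrand muS muZ muA p e m pi r gamma K h.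
Proof.
move=> sh.
have hn : h != [::] by rewrite -size_eq0 sh.
case Hh: (head point h) => [[s z] a].
have trK : traj h K = (s, z, a) by rewrite -Hh -traj_head// sh.
cbn [ext]; rewrite Hh.
rewrite [Lintegrand _ _ _ _ _ _ _ _ _ K h]/Lintegrand /st /at_ trK.
apply: one_step; first exact: exprn_ge0.
move=> s' z' a'.
have tK : traj ((s', z', a') :: h) K = (s, z, a) by rewrite traj_lt ?sh // trK.
have tK1 : traj ((s', z', a') :: h) K.+1 = (s', z', a') by rewrite -sh traj_last.
rewrite /Lintegrand big_ord_recr exprSr.
congr (_ + _); first apply: f_equal2.
- apply: eq_bigr => t _.
  have t1 : (t < size h)%N by rewrite sh ltnS ltnW.
  have t2 : (t.+1 < size h)%N by rewrite sh ltnS.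
  by rewrite /st /zt /at_ !traj_lt.
- by rewrite /st /zt /at_ tK tK1.
- by rewrite /st /at_ tK1.
Qed.

Lemma mainL (p0 : S -> R) (mp0 : measurable_fun setT p0)
  (p0_ge0 : forall s, (0 <= p0 s)%R) K :
  Lobj muS muZ muA p0 p e m pi r gamma K.+1 <= Lobj muS muZ muA p0 p e m pi r gamma K.
Proof.
rewrite /Lobj /Eq.
have E : ext muS muZ muA p pi (zd_model m) K.+1 (Lintegrand muS muZ muA p e m pi r gamma K.+1)
  = ext muS muZ muA p pi (zd_model m) K
      (ext muS muZ muA p pi (zd_model m) 1 (Lintegrand muS muZ muA p e m pi r gamma K.+1)).
  by apply/funext => h; exact: ext_split.
rewrite E.
apply: le_int_free => s0; apply: lee_wpmul2l; first by rewrite lee_fin.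
apply: le_int_free => z0; apply: lee_wpmul2l; first by rewrite lee_fin.
apply: le_int_free => a0; apply: lee_wpmul2l; first by rewrite lee_fin.
apply: ext_mono => [s z a s' z'|l sl]; first exact: m_ge0.
by apply: key; rewrite size_cat sl addn1.
Qed.

End Main.

Theorem mainTheorem3
  (d1 d2 d3 : measure_display) (S : measurableType d1)
  (A : measurableType d2) (Z : measurableType d3) (R : realType)
  (muS : {sigma_finite_measure set S -> \bar R})
  (muZ : {sigma_finite_measure set Z -> \bar R})
  (muA : {sigma_finite_measure set A -> \bar R})
  (p0 : S -> R) (p : S -> A -> S -> R) (e : S -> Z -> R)
  (m : Z -> A -> Z -> R) (pi : Z -> A -> R) (r : S -> A -> R) (gamma : R)
  (* discount *)
  (hg0 : 0 <= gamma) (hg1 : gamma < 1)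
  (* nonnegative reward *)
  (hr : forall s a, 0 <= r s a)
  (* measurability *)
  (mp0 : measurable_fun setT p0)
  (mp : measurable_fun setT (fun x : S * A * S => p x.1.1 x.1.2 x.2))
  (me : measurable_fun setT (fun x : S * Z => e x.1 x.2))
  (mm : measurable_fun setT (fun x : Z * A * Z => m x.1.1 x.1.2 x.2))
  (mpi : measurable_fun setT (fun x : Z * A => pi x.1 x.2))
  (mr : measurable_fun setT (fun x : S * A => r x.1 x.2))
  (* (conditional) probability densities *)
  (p0_ge0 : forall s, 0 <= p0 s)
  (p_ge0 : forall s a s', 0 <= p s a s')
  (e_ge0 : forall s z, 0 <= e s z)
  (m_ge0 : forall z a z', 0 <= m z a z')
  (pi_ge0 : forall z a, 0 <= pi z a)
  (p0_1 : (\int[muS]_s (p0 s)%:E = 1)%E)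
  (p_1 : forall s a, (\int[muS]_s' (p s a s')%:E = 1)%E)
  (e_1 : forall s, (\int[muZ]_z (e s z)%:E = 1)%E)
  (m_1 : forall z a, (\int[muZ]_z' (m z a z')%:E = 1)%E)
  (pi_1 : forall z, (\int[muA]_a (pi z a)%:E = 1)%E)
  (K : nat)
  (* the expectations L^K and L^{K+1} are well defined *)
  (intK : Lintegrable muS muZ muA p0 p e m pi r gamma K)
  (intK1 : Lintegrable muS muZ muA p0 p e m pi r gamma K.+1) :
  (Lobj muS muZ muA p0 p e m pi r gamma K.+1
     <= Lobj muS muZ muA p0 p e m pi r gamma K)%E.
Proof.
by apply: mainL.
Qed.
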